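(* Let $b=(b_1,\ldots,b_n)$, $\alpha=(\alpha_1,\ldots,\alpha_n)$ and $\beta=(\beta_1,\ldots,\beta_n)$ be vectors of nonnegative integers, and let $d$ be an integer, such that $\alpha_1\le\alpha_2\le\cdots\le\alpha_n=d$, $\beta_1\le\beta_2\le\cdots\le\beta_n=d$, $\alpha_i\le\beta_i$ for all $i$, $\alpha_1=0$ and $\beta_1=b_1$. Let $I\subseteq S=K[x_1,\ldots,x_n]$ be the PLP-polymatroidal ideal of type $(\mathbf{0},b\mid\alpha,\beta)$, i.e. the ideal generated by all monomials $x^u=x_1^{u_1}\cdots x_n^{u_n}$ with $u\in\mathbb{Z}_{\ge0}^n$ satisfying $0\le u_i\le b_i$ and $\alpha_i\le u_1+\cdots+u_i\le\beta_i$ for $i=1,\ldots,n$. Then $\mathrm{Soc}^*(I)$ is generated, as a module over the Rees ring $R(I)$, by homogeneous elements of degree $<n$, and $\mathrm{Soc}(I)$ is generated, as an $\mathcal{F}(I)$-module, by homogeneous elements of degree $<n$.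
   Context: $K$ is a field and $\mathfrak{m}=(x_1,\ldots,x_n)$. The ideal $I$ is polymatroidal, generated in degree $d$, and all its powers $I^m$ are generated in degree $md$ and have linear resolutions. For each $m\ge1$, $\mathrm{soc}(I^m)$ denotes the ideal generated by all monomials $u$ of degree $md-1$ with $x_iu\in I^m$ for all $i$; one has $(I^m:\mathfrak{m})=I^m+\mathrm{soc}(I^m)$. The Rees ring is $R(I)=\bigoplus_{m\ge0}I^m$, and $\mathrm{Soc}^*(I)=\bigoplus_{m\ge1}\mathrm{soc}(I^m)$, graded with $\mathrm{soc}(I^m)$ in degree $m$, is a graded $R(I)$-module, elements of $I^r$ mapping $\mathrm{soc}(I^m)$ into $\mathrm{soc}(I^{m+r})$. The fiber cone is $\mathcal{F}(I)=\bigoplus_{m\ge0}I^m/\mathfrak{m}I^m$, and $\mathrm{Soc}(I)=\bigoplus_{m\ge0}(I^m:\mathfrak{m})/I^m$ is a graded $\mathcal{F}(I)$-module with $(I^m:\mathfrak{m})/I^m$ in degree $m$. *)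

(* Defs.v *)
From mathcomp Require Import all_boot all_algebra.
From mathcomp Require Import mpoly.
Set Implicit Arguments. Unset Strict Implicit. Unset Printing Implicit Defensive.
Import GRing.Theory.
Local Open Scope ring_scope.

(* Ideals of S = K[x_1..x_n] = {mpoly K[n]} are represented as predicates
   (subsets) of S.  All ideals below are built with [ideal_span]. *)
Section Ideals.
Variables (K : fieldType) (n : nat).
Local Notation S := {mpoly K[n]}.

Definition ideal_span (G : S -> Prop) : S -> Prop :=
  fun f => exists s : seq (S * S),
    (forall p, p \in s -> G p.2) /\ f = \sum_(p <- s) p.1 * p.2.

Definition idealM (A B : S -> Prop) : S -> Prop :=
  ideal_span (fun f => exists a c, A a /\ B c /\ f = a * c).

Fixpoint ideal_pow (I : S -> Prop) (m : nat) : S -> Prop :=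
  match m with
  | 0 => fun _ => True
  | m'.+1 => idealM (ideal_pow I m') I
  end.

Definition colon_max (J : S -> Prop) : S -> Prop :=
  fun f => forall i : 'I_n, J ('X_i * f).

(* soc(I^m): generated by the monomials u of degree m*d - 1 with
   x_i u in I^m for all i  (degree condition written as deg u + 1 = m d). *)
Definition soc (I : S -> Prop) (d m : nat) : S -> Prop :=
  ideal_span (fun f => exists u : 'X_{1..n},
    (mdeg u).+1 = (m * d)%N /\ (forall i : 'I_n, ideal_pow I m ('X_i * 'X_[u]))
    /\ f = 'X_[u]).

(* Soc^*(I) = (+)_{m>=1} soc(I^m) is generated as an R(I)-module by homogeneous
   elements of degree < N: the degree-m component of the submodule generated by
   the components of degree k < N is  sum_{1<=k<N, k<=m} I^(m-k) soc(I^k),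
   and it must equal soc(I^m) for every m (trivially so for m < N). *)
Definition Soc_star_gen_lt (I : S -> Prop) (d N : nat) : Prop :=
  forall m : nat, (N <= m)%N -> forall f, soc I d m f ->
    ideal_span (fun g => exists k : nat, [/\ (1 <= k)%N, (k < N)%N &
       idealM (ideal_pow I (m - k)) (soc I d k) g]) f.

(* Soc(I) = (+)_{m>=0} (I^m : m)/I^m is generated as an F(I)-module by homogeneous
   elements of degree < N: for every m >= N,
   (I^m : m) = I^m + sum_{0<=k<N} I^(m-k) (I^k : m). *)
Definition Soc_gen_lt (I : S -> Prop) (N : nat) : Prop :=
  forall m : nat, (N <= m)%N -> forall f, colon_max (ideal_pow I m) f ->
    ideal_span (fun g => ideal_pow I m g \/ exists k : nat, (k < N)%N /\
       idealM (ideal_pow I (m - k)) (colon_max (ideal_pow I k)) g) f.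

(* partial sum u_1 + ... + u_i (i is 0-indexed here). *)
Definition psum (u : 'I_n -> nat) (i : 'I_n) : nat :=
  (\sum_(j < n | (j <= i)%N) u j)%N.

Definition plp_ideal (b alpha beta : 'I_n -> nat) : S -> Prop :=
  ideal_span (fun f => exists u : 'X_{1..n},
    [/\ (forall i, u i <= b i)%N,
        (forall i, alpha i <= psum u i <= beta i)%N & f = 'X_[u]]).
End Ideals.

(* Main.v *)
Require Import Defs.
From mathcomp Require Import all_boot all_algebra.
From mathcomp Require Import mpoly.
From mathcomp Require Import zify.
Set Implicit Arguments. Unset Strict Implicit. Unset Printing Implicit Defensive.
Import GRing.Theory.

Section Span.
Variables (K : fieldType) (n : nat).
Local Notation S := {mpoly K[n]}.
Implicit Types (G H : S -> Prop).

Lemma span_gen G g : G g -> ideal_span G g.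
Proof. by move=> Gg; exists [:: (1%R, g)]; split=> [p|]; rewrite ?inE ?big_seq1 ?mul1r // => /eqP ->. Qed.

Lemma span0 G : ideal_span G 0%R.
Proof. by exists [::]; rewrite big_nil. Qed.

Lemma spanD G f g : ideal_span G f -> ideal_span G g -> ideal_span G (f + g)%R.
Proof.
move=> [s [hs ->]] [t [ht ->]]; exists (s ++ t); split; last by rewrite big_cat.
by move=> p; rewrite mem_cat => /orP [/hs|/ht].
Qed.

Lemma spanM G q f : ideal_span G f -> ideal_span G (q * f)%R.
Proof.
move=> [s [hs ->]]; exists [seq (q * p.1, p.2)%R | p <- s]; split.
  by move=> p /mapP [p' /hs hp' ->].
by rewrite big_map mulr_sumr; apply: eq_bigr => p _; rewrite mulrA.
Qed.

Lemma span_sum G (I : eqType) (r : seq I) (F : I -> S) :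
  (forall i, i \in r -> ideal_span G (F i)) -> ideal_span G (\sum_(i <- r) F i)%R.
Proof.
elim: r => [|x r ih] h; first by rewrite big_nil; exact: span0.
rewrite big_cons; apply: spanD; first by apply: h; rewrite inE eqxx.
by apply: ih => i hi; apply: h; rewrite inE hi orbT.
Qed.

Lemma span_trans G H f : (forall g, G g -> ideal_span H g) -> ideal_span G f -> ideal_span H f.
Proof.
move=> hGH [s [hs ->]]; apply: span_sum => p /hs /hGH; exact: spanM.
Qed.

Lemma span_supp G (Q : 'X_{1..n} -> Prop) f :
  (forall a a', Q a -> (a <= a')%MM -> Q a') ->
  (forall g, G g -> forall a, a \in msupp g -> Q a) ->
  ideal_span G f -> forall a, a \in msupp f -> Q a.
Proof.
move=> Qup hG [s [hs ->]] a /msupp_sum_le /flattenP [l /mapP [p hp ->]] /msuppM_le.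
move=> /allpairsP [[m1 m2] /= [_ h2 ->]]; rewrite filter_predT in hp.
exact: (Qup m2 _ (hG _ (hs _ hp) _ h2) (lem_addl _ _)).
Qed.

Lemma pow_mul (I : S -> Prop) m q f : ideal_pow I m f -> ideal_pow I m (q * f)%R.
Proof. by case: m => [//|m] /=; apply: spanM. Qed.

Lemma pow_S (I : S -> Prop) m a c : ideal_pow I m a -> I c -> ideal_pow I m.+1 (a * c)%R.
Proof. by move=> ha hc; apply: span_gen; exists a, c. Qed.

End Span.



Lemma dv (X m : nat) : 0 < m -> X %/ m * m <= X /\ X < (X %/ m).+1 * m.
Proof. move=> hm; split; [exact: leq_divM | exact: ltn_ceil]. Qed.
Ltac dvf X m hm := let h := fresh in have h := @dv X m hm; move: h; generalize (X %/ m).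

Lemma arF_mono m r A B : 0 < m -> A <= B -> (A + r) %/ m <= (B + r) %/ m.
Proof. by move=> hm hAB; apply: leq_div2r; lia. Qed.

Lemma arG_mono m r A B : 0 < m -> A <= B -> (B + r) %/ m - (A + r) %/ m <= B - A.
Proof. move=> hm hAB; dvf (B + r) m hm; dvf (A + r) m hm => qa [? ?] qb [? ?]; nia. Qed.

Lemma ar_comp m r A B c : 0 < m -> A <= B -> B - A <= m * c ->
  (B + r) %/ m - (A + r) %/ m <= c.
Proof. move=> hm hAB h; dvf (B + r) m hm; dvf (A + r) m hm => qa [? ?] qb [? ?]; nia. Qed.

Lemma ar_pref m r X a c : r < m -> m * a <= X <= m * c -> a <= (X + r) %/ m <= c.
Proof. move=> hr /andP [h1 h2]; have hm : 0 < m by lia. dvf (X + r) m hm => q [? ?]. apply/andP; split; nia. Qed.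

Lemma ar_G_comp m r A B c : 0 < m -> A <= B -> B - A <= m * c ->
  (B - (B + r) %/ m) - (A - (A + r) %/ m) <= (m - 1) * c.
Proof. move=> hm hAB h; dvf (B + r) m hm; dvf (A + r) m hm => qa [? ?] qb [? ?]; nia. Qed.

Lemma ar_G_pref m r X a c : r < m -> m * a <= X <= m * c ->
  (m - 1) * a <= X - (X + r) %/ m <= (m - 1) * c.
Proof. move=> hr /andP [h1 h2]; have hm : 0 < m by lia. dvf (X + r) m hm => q [? ?]. apply/andP; split; nia. Qed.

Lemma ar_G_top m r X c : 0 < r -> r < m -> X + 1 <= m * c -> X - (X + r) %/ m + 1 <= (m - 1) * c.
Proof. move=> h0 hr h; have hm : 0 < m by lia. dvf (X + r) m hm => q [? ?]. nia. Qed.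

Lemma ar_last m r d : r < m -> (m * d + r) %/ m = d.
Proof. move=> hr; rewrite mulnC divnMDl ?divn_small //; lia. Qed.

Lemma ar_divD m X Y : 0 < m -> X %/ m + Y %/ m <= (X + Y) %/ m.
Proof. by move=> hm; rewrite divnD // leq_addr. Qed.

Lemma ar_G_comp_strict m r A B c : 1 < m -> A <= B -> B - A + 1 <= m * c ->
  (B - A + 1 = m * c -> (A + r) %% m != 0) ->
  (B - (B + r) %/ m) - (A - (A + r) %/ m) + 1 <= (m - 1) * c.
Proof.
move=> hm hAB h hne; have hm0 : 0 < m by lia.
have hq := @ar_divD m (A + r) (B - A) hm0.
rewrite (_ : A + r + (B - A) = B + r) in hq; last lia.
have e := divn_eq (A + r) m.
have hmod := @ltn_pmod (A + r) m hm0.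
move: hq e hne hmod; generalize ((A + r) %% m) => t.
dvf (B - A) m hm0; dvf (B + r) m hm0; dvf (A + r) m hm0 => qa [? ?] qb [? ?] q [? ?] hq e hne ht.
case: (ltnP (B - A + 1) (m * c)) => hlt.
  have hqc : q < c by nia.
  case: (ltnP q c.-1) => hq2; nia.
have ht0 : t != 0 by apply: hne; lia.
nia.
Qed.

Section Comb.
Variables (n : nat) (b alpha beta : 'I_n -> nat) (d : nat).

Definition PS (u : 'X_{1..n}) t := \sum_(s < t) nth 0 u s.

Lemma psumE (u : 'X_{1..n}) (i : 'I_n) : psum u i = PS u i.+1.
Proof.
rewrite /PS (big_ord_widen n (fun s => nth 0 u s)) //.
by apply: eq_big => [j|j _]; rewrite ?ltnS // (mnm_nth 0).
Qed.

Lemma mdegPS u : mdeg u = PS u n.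
Proof. by rewrite mdegE /PS; apply: eq_bigr => j _; rewrite (mnm_nth 0). Qed.

Lemma PS_S u t : PS u t.+1 = PS u t + nth 0 u t.
Proof. by rewrite /PS big_ord_recr. Qed.

Lemma PS_mono u t : PS u t <= PS u t.+1.
Proof. by rewrite PS_S leq_addr. Qed.

Lemma psumD (u v : 'X_{1..n}) i : psum (u + v)%MM i = psum u i + psum v i.
Proof. by rewrite /psum -big_split; apply: eq_bigr => j _; rewrite mnmDE. Qed.

Lemma psumU (q i : 'I_n) : psum U_(q)%MM i = (q <= i).
Proof.
rewrite /psum (eq_bigr (fun j : 'I_n => nat_of_bool (j == q))) => [|j _]; last by rewrite mnm1E eq_sym.
case: (leqP q i) => h.
  by rewrite (bigD1 q) //= eqxx big1 // => j /andP [_ /negbTE ->].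
rewrite big1 // => j hj; case: eqP => // hjq; move: hj h; rewrite hjq; lia.
Qed.


Definition mk (F : nat -> nat) : 'X_{1..n} := [multinom F i.+1 - F i | i < n].

Lemma mkE F (i : 'I_n) : mk F i = F i.+1 - F i.
Proof. by rewrite mnmE. Qed.

Lemma nth_mk F t (ht : t < n) : nth 0 (mk F) t = F t.+1 - F t.
Proof. by rewrite -(mkE F (Ordinal ht)) (mnm_nth 0). Qed.

Lemma PS_mk F : F 0 = 0 -> (forall t, F t <= F t.+1) -> forall t, t <= n -> PS (mk F) t = F t.
Proof.
move=> F0 Fm; elim=> [|t ih] ht; first by rewrite /PS big_ord0.
rewrite PS_S ih ?(ltnW ht) // nth_mk //; have := Fm t; lia.
Qed.

Lemma mk_PS u : mk (PS u) = u.
Proof. by apply/mnmP => i; rewrite mkE PS_S addKn (mnm_nth 0). Qed.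

Lemma mk_add F G : (forall t, F t <= F t.+1) -> (forall t, G t <= G t.+1) ->
  (mk F + mk G)%MM = mk (fun t => F t + G t).
Proof. by move=> hF hG; apply/mnmP => i; rewrite mnmDE !mkE; have := hF i; have := hG i; lia. Qed.

Lemma mk_ext F G : (forall t, F t = G t) -> mk F = mk G.
Proof. by move=> h; apply/mnmP => i; rewrite !mkE !h. Qed.

Definition P m (u : 'X_{1..n}) := (forall i, u i <= m * b i) /\
   (forall i, m * alpha i <= psum u i <= m * beta i).

Definition Sc m (u : 'X_{1..n}) := [/\ (forall i, u i + 1 <= m * b i),
   (forall i : 'I_n, m * alpha i <= psum u i + (i.+1 == n)) &
   (forall i, psum u i + 1 <= m * beta i)].

Lemma P_add m k u v : P m u -> P k v -> P (m + k) (u + v)%MM.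
Proof.
move=> [h1 h2] [h3 h4]; split=> i; rewrite ?mnmDE ?psumD mulnDl.
  by have := h1 i; have := h3 i; lia.
by have := h2 i; have := h4 i; lia.
Qed.

Lemma P0 : P 0 0%MM.
Proof. split=> i; rewrite ?mnm0E // /psum big1 // => j _; exact: mnm0E. Qed.

Lemma Sc_of m u : (forall q, P m (u + U_(q))%MM) -> Sc m u.
Proof.
move=> h; split=> i.
- by have [+ _] := h i => /(_ i); rewrite mnmDE mnm1E eqxx.
- have hl : n.-1 < n by case: (n) i => [[]|].
  have [_ /(_ i)] := h (Ordinal hl); rewrite psumD psumU /=.
  have := ltn_ord i; case: eqP; lia.
- by have [_ /(_ i)] := h i; rewrite psumD psumU leqnn => /andP [_ ].
Qed.

Lemma Sc_to m u : Sc m u -> forall q, P m (u + U_(q))%MM.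
Proof.
move=> [h1 h2 h3] q; split=> i.
- by rewrite mnmDE mnm1E; have := h1 i; case: eqP; lia.
- rewrite psumD psumU; have := h2 i; have := h3 i; have := ltn_ord q; have := ltn_ord i.
  case: eqP; case: leqP; lia.
Qed.


Lemma X_diff (x : 'X_{1..n}) (i : 'I_n) : PS x i.+1 - PS x i = x i.
Proof. by rewrite PS_S addKn (mnm_nth 0). Qed.

Section Split.
Variables (x : 'X_{1..n}) (m r : nat).
Hypothesis (hm : 0 < m) (hr : r < m).
Let F t := (PS x t + r) %/ m.
Let G t := PS x t - F t.

Lemma F_mono t : F t <= F t.+1.
Proof. exact: arF_mono (PS_mono _ _). Qed.
Lemma G_mono t : G t <= G t.+1.
Proof. rewrite /G; have := arG_mono r hm (PS_mono x t); have := PS_mono x t; have := F_mono t; rewrite /F; lia. Qed.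
Lemma F0 : F 0 = 0.
Proof. by rewrite /F /PS big_ord0 add0n divn_small. Qed.
Lemma G0 : G 0 = 0.
Proof. by rewrite /G /PS big_ord0. Qed.

Lemma split_eq : x = (mk F + mk G)%MM.
Proof.
rewrite mk_add; [|exact: F_mono|exact: G_mono].
rewrite -{1}(mk_PS x); apply: mk_ext => t; rewrite /G subnKC //.
rewrite /F; have := @ar_pref m r (PS x t) 0 (PS x t) hr; rewrite muln0 leq0n /=.
by move=> /(_ (leq_pmull _ hm)).
Qed.

Lemma PS_F t : t <= n -> PS (mk F) t = F t.
Proof. exact: PS_mk F0 F_mono t. Qed.
Lemma PS_G t : t <= n -> PS (mk G) t = G t.
Proof. exact: PS_mk G0 G_mono t. Qed.
Lemma mkF_i (i : 'I_n) : mk F i = F i.+1 - F i.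
Proof. exact: mkE. Qed.
Lemma mkG_i (i : 'I_n) : mk G i = G i.+1 - G i.
Proof. exact: mkE. Qed.
End Split.

Lemma decomp m x : P m.+1 x -> exists y z, [/\ x = (y + z)%MM, P 1 y & P m z].
Proof.
move=> [hc hp]; have hm : 0 < m.+1 by [].
have hr : 0 < m.+1 by [].
exists (mk (fun t => (PS x t + 0) %/ m.+1)), (mk (fun t => PS x t - (PS x t + 0) %/ m.+1)).
split; first exact: split_eq.
- split=> i.
    rewrite mkF_i mul1n; apply: ar_comp => //; first exact: PS_mono.
    by rewrite X_diff.
  rewrite psumE PS_F // !mul1n; apply: ar_pref => //; by rewrite -psumE.
- split=> i.
    rewrite mkG_i; have := @ar_G_comp m.+1 0 (PS x i) (PS x i.+1) (b i) hm (PS_mono _ _).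
    by rewrite X_diff subn1 /= => /(_ (hc i)).
  rewrite psumE PS_G //; have := @ar_G_pref m.+1 0 (PS x i.+1) (alpha i) (beta i) hr.
  by rewrite -psumE subn1 /= => /(_ (hp i)).
Qed.

End Comb.


Lemma ar_mod M X r : r < M -> (X + r) %% M = 0 -> r = (M - X %% M) %% M.
Proof.
move=> hr h; have hM : 0 < M by lia.
rewrite -modnDml in h; have ha := @ltn_pmod X M hM; move: ha h.
generalize (X %% M) => a ha h.
have e := divn_eq (a + r) M; rewrite h addn0 in e.
have hq : (a + r) %/ M < 2 by rewrite ltn_divLR //; lia.
move: e hq; generalize ((a + r) %/ M) => q e hq.
case: q e hq => [|[|q]] e hq //.
- have -> : r = 0 by lia. have -> : a = 0 by lia. by rewrite subn0 modnn.
- rewrite modn_small; lia.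
Qed.

Lemma pigeon M k (f : 'I_k -> 'I_M) : k < M -> exists r : 'I_M, forall j, f j != r.
Proof.
move=> hk; case: (pickP (fun r : 'I_M => r \notin codom f)) => [r hr|h].
  by exists r => j; apply: contraNneq hr => <-; exact: codom_f.
have e : #|'I_M| = #|codom f|.
  by apply: eq_card => r; rewrite inE; move: (h r) => /negbFE ->.
have := card_size (codom f); rewrite -e size_codom !card_ord; lia.
Qed.

Section Core.
Variables (n : nat) (b alpha beta : 'I_n -> nat) (d : nat).
Hypothesis hbeta_mono : forall i j : 'I_n, (i <= j)%N -> (beta i <= beta j)%N.
Hypothesis halpha_n : forall i : 'I_n, (i : nat).+1 = n -> alpha i = d.
Hypothesis hbeta_n : forall i : 'I_n, (i : nat).+1 = n -> beta i = d.

Lemma core m u : 1 < n -> n <= m.+1 -> Sc b alpha beta m.+1 u ->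
  exists v w, [/\ u = (v + w)%MM, P b alpha beta 1 v & Sc b alpha beta m w].
Proof.
move=> hn hnm [h1 h2 h3].
have hM : 0 < m.+1 by [].
have hl : n.-1 < n by lia.
pose last := Ordinal hl.
have lastE : forall i : 'I_n, (last <= i) = (i.+1 == n).
  by move=> i /=; have := ltn_ord i; case: eqP; lia.
have lastE' : forall i : 'I_n, (last == i) = (i.+1 == n).
  by move=> i; rewrite -val_eqE /=; have := ltn_ord i; case: eqP; case: eqP; lia.
pose x := (u + U_(last))%MM.
have xi : forall i : 'I_n, x i = u i + (i.+1 == n).
  by move=> i; rewrite mnmDE mnm1E lastE'.
have Xi : forall i : 'I_n, PS x i.+1 = psum u i + (i.+1 == n).
  by move=> i; rewrite -psumE psumD psumU lastE.
have XMd : forall i : 'I_n, i.+1 = n -> PS x i.+1 = m.+1 * d.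
  move=> i hi; rewrite Xi; have := h2 i; have := h3 i.
  by rewrite halpha_n // hbeta_n // hi eqxx; lia.
have Xlo : forall i : 'I_n, m.+1 * alpha i <= PS x i.+1 by move=> i; rewrite Xi; exact: h2.
have Xhi : forall i : 'I_n, i.+1 < n -> PS x i.+1 + 1 <= m.+1 * beta i.
  move=> i hi; rewrite Xi; have := h3 i.
  by rewrite (_ : (i.+1 == n) = false); lia.
have Xhi' : forall i : 'I_n, PS x i.+1 <= m.+1 * beta i.
  move=> i; case: (ltnP i.+1 n) => hi; first by have := Xhi i hi; lia.
  by rewrite XMd ?hbeta_n //; have := ltn_ord i; lia.
have xc : forall i : 'I_n, x i <= m.+1 * b i.
  by move=> i; rewrite xi; have := h1 i; case: (_ == _) => /=; lia.
have xc' : forall i : 'I_n, i.+1 < n -> x i + 1 <= m.+1 * b i.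
  by move=> i hi; rewrite xi; have := h1 i; rewrite (_ : (i.+1 == n) = false); lia.
pose bad (j : 'I_n.-1) : 'I_m.+1 := inord ((m.+1 - PS x j %% m.+1) %% m.+1).
have [r hr] := @pigeon m.+1 n.-1 bad (ltac:(lia)).
have hmod : forall i : 'I_n, i.+1 < n -> (PS x i + r) %% m.+1 != 0.
  move=> i hi; apply/eqP => /(@ar_mod _ _ _ (ltn_ord r)) e.
  have hj : i < n.-1 by lia.
  move: (hr (Ordinal hj)) => /negP; apply; apply/eqP/val_inj.
  by rewrite /bad /= inordK ?e // ltn_pmod.
have hrM : r < m.+1 := ltn_ord r.
have r0 : 0 < r.
  have h0 : 0 < n by lia.
  have := hmod (Ordinal h0) (ltac:(simpl; lia)); rewrite /PS big_ord0 add0n.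
  by rewrite lt0n; apply: contra_neq => ->; rewrite mod0n.
have hsplit := split_eq x hM hrM.
set v := mk _ _ in hsplit; set w' := mk _ _ in hsplit.
have vi : forall i : 'I_n, v i = (PS x i.+1 + r) %/ m.+1 - (PS x i + r) %/ m.+1 := mkF_i x m.+1 r.
have wi : forall i : 'I_n, w' i = (PS x i.+1 - (PS x i.+1 + r) %/ m.+1) - (PS x i - (PS x i + r) %/ m.+1) := mkG_i x m.+1 r.
have vp : forall i : 'I_n, psum v i = (PS x i.+1 + r) %/ m.+1.
  by move=> i; rewrite psumE PS_F.
have wp : forall i : 'I_n, psum w' i = PS x i.+1 - (PS x i.+1 + r) %/ m.+1.
  by move=> i; rewrite psumE PS_G.
have Gn : forall i : 'I_n, i.+1 = n -> psum w' i = m * d.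
  by move=> i hi; rewrite wp XMd // ar_last //; lia.
have Gtop : forall i : 'I_n, i.+1 < n -> psum w' i + 1 <= m * beta i.
  move=> i hi; rewrite wp; have := @ar_G_top m.+1 r (PS x i.+1) (beta i) r0 hrM (Xhi i hi).
  by rewrite subn1.
have wl : 0 < w' last.
  have hi2 : n.-2 < n by lia.
  have := Gtop (Ordinal hi2) (ltac:(simpl; lia)).
  have := hbeta_mono (i := Ordinal hi2) (j := last) (ltac:(simpl; lia)).
  rewrite (hbeta_n (i := last)); last by simpl; lia.
  have := Gn last (ltac:(simpl; lia)).
  rewrite wi !wp /= (_ : n.-2.+1 = n.-1); last by lia.
  rewrite (_ : n.-1.+1 = n); last by lia.
  nia.
pose w := (w' - U_(last))%MM.
have hw' : w' = (w + U_(last))%MM by rewrite submK // lep1mP -lt0n.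
have wpsum : forall i : 'I_n, psum w' i = psum w i + (i.+1 == n).
  by move=> i; rewrite hw' psumD psumU lastE.
have wcomp : forall i : 'I_n, w' i = w i + (i.+1 == n).
  by move=> i; rewrite hw' mnmDE mnm1E lastE'.
exists v, w; split.
- apply: (@addIm _ U_(last)%MM); rewrite -addmA -hw' -hsplit //.
- split=> i.
    rewrite vi mul1n; apply: ar_comp; [exact: hM | exact: PS_mono |].
    by rewrite X_diff.
  by rewrite vp !mul1n; apply: ar_pref => //; rewrite Xlo Xhi'.
- split=> i.
  + case: (ltnP i.+1 n) => hi.
      have := wcomp i; rewrite (_ : (i.+1 == n) = false); last by lia.
      rewrite addn0 => <-; rewrite wi.
      have := @ar_G_comp_strict m.+1 r (PS x i) (PS x i.+1) (b i) (ltac:(lia)) (PS_mono _ _).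
      rewrite X_diff subn1 /=; apply; first exact: xc' hi.
      by move=> _; apply: hmod.
    have := wcomp i; rewrite (_ : (i.+1 == n) = true); last by have := ltn_ord i; lia.
    move=> /= e; rewrite -e wi.
    have := @ar_G_comp m.+1 r (PS x i) (PS x i.+1) (b i) hM (PS_mono _ _).
    by rewrite X_diff subn1 /=; apply; exact: xc.
  + rewrite -wpsum wp; have := @ar_G_pref m.+1 r (PS x i.+1) (alpha i) (beta i) hrM.
    by rewrite subn1 /= Xlo Xhi' => /(_ isT) /andP [].
  + case: (ltnP i.+1 n) => hi.
      by have := Gtop i hi; rewrite wpsum (_ : (i.+1 == n) = false); [rewrite addn0|lia].
    have hi' : i.+1 = n by have := ltn_ord i; lia.
    by have := Gn i hi'; rewrite wpsum hi' eqxx hbeta_n // => ->.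
Qed.

Lemma core_iter k m u : 1 < n -> m = n.-1 + k -> Sc b alpha beta m u ->
  exists v w, [/\ u = (v + w)%MM, P b alpha beta k v & Sc b alpha beta n.-1 w].
Proof.
move=> hn; elim: k m u => [|k ih] m u -> hS.
  by exists 0%MM, u; split; rewrite ?add0m //; first exact: P0; rewrite addn0 in hS.
rewrite addnS in hS; have [| v1 [w1 [e1 hv1 hw1]]] := core hn _ hS; first by lia.
have [v2 [w2 [e2 hv2 hw2]]] := ih _ w1 erefl hw1.
exists (v1 + v2)%MM, w2; split => //; first by rewrite e1 e2 addmA.
by rewrite -add1n; apply: P_add.
Qed.

Lemma psum_last (u : 'X_{1..n}) (i : 'I_n) : i.+1 = n -> psum u i = mdeg u.
Proof. by move=> hi; rewrite psumE mdegPS hi. Qed.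

Lemma Pdeg m x : 0 < n -> P b alpha beta m x -> mdeg x = m * d.
Proof.
move=> hn [_ hp]; have hl : n.-1 < n by lia.
have := hp (Ordinal hl); rewrite psum_last /=; last by lia.
by rewrite halpha_n ?hbeta_n /=; try lia.
Qed.

Lemma Scdeg m u : 0 < n -> Sc b alpha beta m u -> (mdeg u).+1 = m * d.
Proof.
move=> hn [_ h2 h3]; have hl : n.-1 < n by lia.
have := h2 (Ordinal hl); have := h3 (Ordinal hl).
rewrite psum_last /=; last by lia.
rewrite halpha_n ?hbeta_n /=; try lia.
Qed.

Lemma mdeg_le (x y : 'X_{1..n}) : (x <= y)%MM -> mdeg x <= mdeg y.
Proof. by move=> h; rewrite -(submK h) mdegD leq_addl. Qed.

Lemma mdeg_le_eq (x y : 'X_{1..n}) : (x <= y)%MM -> mdeg x = mdeg y -> x = y.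
Proof.
move=> h e; rewrite -(submK h); have : mdeg (y - x)%MM = 0.
  by have := mdegD (y - x)%MM x; rewrite submK //; lia.
by move/eqP; rewrite mdeg_eq0 => /eqP ->; rewrite add0m.
Qed.


Lemma PS_split (u : 'X_{1..n}) s t : s <= t -> PS u t = PS u s + \sum_(s <= k < t) nth 0 u k.
Proof. by move=> h; rewrite /PS -!(big_mkord xpredT) (big_cat_nat (leq0n s) h). Qed.

Lemma nthO (u : 'X_{1..n}) k (hk : k < n) : nth 0 u k = u (Ordinal hk).
Proof. by rewrite (mnm_nth 0). Qed.

Lemma exch m a : 0 < n -> m * d <= mdeg a ->
  (forall q : 'I_n, exists x, P b alpha beta m x /\ (x <= a + U_(q))%MM) ->
  exists y, P b alpha beta m y /\ (y <= a)%MM.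
Proof.
move=> hn hdeg h.
have hl : n.-1 < n by lia.
pose last := Ordinal hl.
have lastE : forall i : 'I_n, (last <= i) = (i.+1 == n).
  by move=> i /=; have := ltn_ord i; case: eqP; lia.
have lastE' : forall i : 'I_n, (last == i) = (i.+1 == n).
  by move=> i; rewrite -val_eqE /=; have := ltn_ord i; case: eqP; case: eqP; lia.
have [x [Px hx]] := h last.
case hxa: (x <= a)%MM; first by exists x.
have hxi : forall i : 'I_n, x i <= a i + (i.+1 == n).
  by move=> i; move/mnm_lepP: hx => /(_ i); rewrite mnmDE mnm1E lastE'.
have hxl : x last = a last + 1.
  case: (leqP (x last) (a last)) => h'; last by have := hxi last; rewrite /= (_ : n.-1.+1 == n); lia.
  move: hxa; suff -> : (x <= a)%MM by [].
  apply/mnm_lepP => i; case: (ltnP i.+1 n) => hi.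
    by have := hxi i; rewrite (_ : (i.+1 == n) = false); lia.
  have -> : i = last by apply: val_inj => /=; have := ltn_ord i; lia.
  exact: h'.
have hmx := Pdeg hn Px.
case: (pickP (fun j : 'I_n => x j < a j)) => [j0 hj0|hnone]; last first.
  have : (a + U_(last) <= x)%MM.
    apply/mnm_lepP => i; rewrite mnmDE mnm1E lastE'.
    case: (ltnP i.+1 n) => hi.
      by have := hnone i; rewrite /= (_ : (i.+1 == n) = false); lia.
    have -> : i = last by apply: val_inj => /=; have := ltn_ord i; lia.
    by rewrite hxl /= (_ : n.-1.+1 == n); lia.
  by move/mdeg_le; rewrite mdegD mdeg1; lia.
case: (@arg_maxnP _ j0 (fun j => x j < a j) (fun j : 'I_n => nat_of_ord j) hj0) => j hj hmax.
have hjl : j.+1 < n.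
  case: (ltnP j.+1 n) => // hj'; have ej : j = last by apply: val_inj => /=; have := ltn_ord j; lia.
  by move: hj; rewrite ej hxl; lia.
case: (ltnP (x j) (m * b j)) => hxb; last first.
  have [z [Pz hz]] := h j; exists z; split => //.
  apply/mnm_lepP => i; move/mnm_lepP: hz => /(_ i); rewrite mnmDE mnm1E.
  case: eqP => [<-|_]; last by rewrite addn0.
  by have := Pz.1 j; move: hj hxb => /=; lia.
have h0 : 0 < n by lia.
pose first := Ordinal h0.
have [z [Pz hz]] := h first.
have hza : forall k (hk : k < n), 0 < k -> nth 0 z k <= nth 0 a k.
  move=> k hk k0; rewrite !nthO; move/mnm_lepP: hz => /(_ (Ordinal hk)).
  by rewrite mnmDE mnm1E -val_eqE /= (_ : (0 == k) = false); [rewrite addn0|lia].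
have hax : forall k (hk : k < n), j < k -> k.+1 < n -> nth 0 a k <= nth 0 x k.
  move=> k hk hjk hk1; rewrite !nthO; case: (leqP (a (Ordinal hk)) (x (Ordinal hk))) => // hlt.
  by have := hmax _ hlt; rewrite /=; lia.
have key : forall i : 'I_n, j <= i -> i.+1 < n -> psum x i + 1 <= psum z i.
  move=> i hji hi; rewrite !psumE.
  have hx2 := Pdeg hn Px; have hz' := Pdeg hn Pz.
  rewrite !mdegPS in hx2 hz'.
  rewrite (PS_split x (ltnW hi)) in hx2; rewrite (PS_split z (ltnW hi)) in hz'.
  suff : \sum_(i.+1 <= k < n) nth 0 z k + 1 <= \sum_(i.+1 <= k < n) nth 0 x k by lia.
  have e3 : forall (s : nat) (f : nat -> nat), s <= n.-1 ->
      \sum_(s <= k < n) f k = \sum_(s <= k < n.-1) f k + f n.-1.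
    by move=> s f hs; rewrite -{1}(ltn_predK hi) big_nat_recr.
  rewrite !e3; try lia.
  have e1 : nth 0 z n.-1 <= nth 0 a n.-1 by apply: hza; lia.
  have e2 : nth 0 a n.-1 + 1 = nth 0 x n.-1 by rewrite !(nthO _ hl) hxl.
  suff : \sum_(i.+1 <= k < n.-1) nth 0 z k <= \sum_(i.+1 <= k < n.-1) nth 0 x k by lia.
  rewrite big_nat_cond [X in _ <= X]big_nat_cond; apply: leq_sum => k /andP [/andP [hk1 hk2] _].
  have hk : k < n by lia.
  apply: leq_trans (hza k hk _) (hax k hk _ _); lia.
pose y := (x + U_(j) - U_(last))%MM.
have hly : (U_(last) <= x + U_(j))%MM by rewrite lep1mP mnmDE hxl; lia.
have ey : (y + U_(last) = x + U_(j))%MM by rewrite submK.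
have yi : forall i : 'I_n, y i + (i.+1 == n) = x i + (j == i).
  by move=> i; rewrite -lastE' -mnm1E -mnmDE ey mnmDE mnm1E.
have yp : forall i : 'I_n, psum y i + (i.+1 == n) = psum x i + (j <= i).
  by move=> i; rewrite -lastE -psumU -psumD ey psumD psumU.
exists y; split.
- split=> i.
    have := yi i; have := Px.1 i; case: (eqVneq j i) => [e|ne]; [subst i|]; case: (_ == n) => /=; move: hxb; lia.
  have := yp i; have := Px.2 i; case: (ltnP i.+1 n) => hi.
    rewrite (_ : (i.+1 == n) = false); last by lia.
    case: (leqP j i) => hji; last by lia.
    have := key i hji hi; have := (Pz.2 i); lia.
  rewrite (_ : (i.+1 == n) = true); last by have := ltn_ord i; lia.
  rewrite (_ : j <= i); last by lia.
  lia.
- apply/mnm_lepP => i; have := yi i; have := hxi i; case: (ltnP i.+1 n) => hi.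
    rewrite (_ : (i.+1 == n) = false); last by lia.
    case: eqP => [<-|_]; last by lia.
    by move: hj => /=; lia.
  have ei : i = last by apply: val_inj => /=; have := ltn_ord i; lia.
  rewrite (_ : (i.+1 == n) = true); last by have := ltn_ord i; lia.
  rewrite (_ : (j == i) = false); last by apply/eqP => ej; move: hjl; rewrite ej ei /=; lia.
  by rewrite ei hxl; lia.
Qed.

End Core.

Section Poly.
Variables (K : fieldType) (n : nat) (b alpha beta : 'I_n -> nat).
Local Notation I := (plp_ideal (K:=K) b alpha beta).

Lemma lemD (x1 x2 y1 y2 : 'X_{1..n}) : (x1 <= y1)%MM -> (x2 <= y2)%MM -> (x1 + x2 <= y1 + y2)%MM.
Proof.
move=> /mnm_lepP h1 /mnm_lepP h2; apply/mnm_lepP => i; rewrite !mnmDE.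
exact: leq_add.
Qed.

Lemma gen_in_I u : P b alpha beta 1 u -> I 'X_[u].
Proof.
move=> [h1 h2]; apply: span_gen; exists u; split => // i.
  by have := h1 i; rewrite mul1n.
by have := h2 i; rewrite !mul1n.
Qed.

Lemma mem_pow m x : P b alpha beta m x -> ideal_pow I m 'X_[x].
Proof.
elim: m x => [//|m ih] x /decomp [y [z [-> hy hz]]].
by rewrite addmC mpolyXD; apply: pow_S; [apply: ih | apply: gen_in_I].
Qed.

Lemma supp_I p : I p -> forall a, a \in msupp p -> exists y, P b alpha beta 1 y /\ (y <= a)%MM.
Proof.
apply: (@span_supp K n _ (fun a => exists y, P b alpha beta 1 y /\ (y <= a)%MM)).
  by move=> a1 a2 [y [hy h1]] h2; exists y; split => //; exact: lepm_trans h1 h2.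
move=> g [u [h1 h2 ->]] a0; rewrite msuppX inE => /eqP ->.
exists u; split; last exact: lepm_refl.
by split=> i; rewrite ?mul1n //; have := h2 i; rewrite !mul1n.
Qed.

Lemma supp_pow m p : ideal_pow I m p -> forall a, a \in msupp p ->
  exists x, P b alpha beta m x /\ (x <= a)%MM.
Proof.
elim: m p => [|m ih] p.
  move=> _ a _; exists 0%MM; split; first exact: P0.
  by apply/mnm_lepP => i; rewrite mnm0E.
apply: (@span_supp K n _ (fun a => exists x, P b alpha beta m.+1 x /\ (x <= a)%MM)).
  by move=> a1 a2 [y [hy h1]] h2; exists y; split => //; exact: lepm_trans h1 h2.
move=> g [a1 [c1 [ha1 [hc1 ->]]]] a0 /msuppM_le /allpairsP [[m1 m2] /= [h1 h2 ->]].
have [x1 [hx1 hle1]] := ih _ ha1 _ h1.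
have [y1 [hy1 hle2]] := supp_I hc1 h2.
exists (x1 + y1)%MM; split; last exact: lemD.
by rewrite -addn1; apply: P_add.
Qed.

End Poly.

Import GRing.Theory.

Theorem theorem3p7 (K : fieldType) (n : nat) (b alpha beta : 'I_n -> nat) (d : nat)
  (hn : (0 < n)%N)
  (halpha_mono : forall i j : 'I_n, (i <= j)%N -> (alpha i <= alpha j)%N)
  (hbeta_mono : forall i j : 'I_n, (i <= j)%N -> (beta i <= beta j)%N)
  (halpha_n : forall i : 'I_n, (i : nat).+1 = n -> alpha i = d)
  (hbeta_n : forall i : 'I_n, (i : nat).+1 = n -> beta i = d)
  (hab : forall i : 'I_n, (alpha i <= beta i)%N)
  (halpha_1 : forall i : 'I_n, (i : nat) = 0%N -> alpha i = 0%N)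
  (hbeta_1 : forall i : 'I_n, (i : nat) = 0%N -> beta i = b i) :
  Soc_star_gen_lt (plp_ideal (K:=K) b alpha beta) d n /\
  Soc_gen_lt (plp_ideal (K:=K) b alpha beta) n.
Proof.
have hn2 : n = 1 -> d = 0.
  move=> e; have h0 : 0 < n by [].
  by rewrite -(halpha_n (Ordinal h0)) ?(halpha_1 (Ordinal h0)) //= e.
have key : forall m u, n <= m -> Sc b alpha beta m u -> (mdeg u).+1 = m * d ->
    exists v w, [/\ u = (v + w)%MM, P b alpha beta (m - n.-1) v & Sc b alpha beta n.-1 w] /\ 1 < n.
  move=> m u hm hS hdeg.
  have n2 : 1 < n.
    case: (ltnP 1 n) => // h1; have e : n = 1 by lia.
    by move: hdeg; rewrite hn2 // muln0.
  have [v [w [e hv hw]]] := @core_iter n b alpha beta d hbeta_mono halpha_n hbeta_n (m - n.-1) m u n2 (ltac:(lia)) hS.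
  by exists v, w; split.
have PX : forall m (u : 'X_{1..n}) q,
    ideal_pow (plp_ideal (K:=K) b alpha beta) m ('X_q * 'X_[u])%R ->
    exists x, P b alpha beta m x /\ (x <= u + U_(q))%MM.
  move=> m u q h; have := @supp_pow K n b alpha beta m _ h (U_(q) + u)%MM.
  by rewrite -mpolyXD msuppX mem_seq1 eqxx addmC => /(_ isT).
split.
- move=> m hm f hf; apply: (span_trans _ hf) => g [u [hdeg [hX ->]]].
  have hS : Sc b alpha beta m u.
    apply: Sc_of => q; have [x [hx hle]] := PX m u q (hX q).
    suff <- : x = (u + U_(q))%MM by [].
    apply: mdeg_le_eq => //; rewrite (Pdeg halpha_n hbeta_n hn hx) mdegD mdeg1 addn1 //.
  have [v [w [[e hv hw] n2]]] := key m u hm hS hdeg.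
  apply: span_gen; exists n.-1; split; [lia | lia |].
  rewrite e mpolyXD; apply: span_gen; exists 'X_[v], 'X_[w]; split; first exact: mem_pow.
  split => //; apply: span_gen; exists w; split; first exact: (Scdeg halpha_n hbeta_n hn hw).
  split => // i; rewrite -mpolyXD addmC; apply: mem_pow; exact: Sc_to.
- move=> m hm f hf; rewrite (mpolyE f); apply: span_sum => a ha.
  rewrite -mul_mpolyC; apply: spanM.
  have hq : forall q : 'I_n, exists x, P b alpha beta m x /\ (x <= a + U_(q))%MM.
    move=> q; have := @supp_pow K n b alpha beta m _ (hf q) (U_(q) + a)%MM.
    rewrite mcoeff_msupp mulrC mcoeffMX -mcoeff_msupp ha addmC => /(_ isT) //.
  case: (ltnP (mdeg a) (m * d)) => hlt.
    have hdeg : (mdeg a).+1 = m * d.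
      have [x [hx hle]] := hq (Ordinal hn); have := mdeg_le hle.
      by rewrite mdegD mdeg1 (Pdeg halpha_n hbeta_n hn hx); lia.
    have hS : Sc b alpha beta m a.
      apply: Sc_of => q; have [x [hx hle]] := hq q.
      suff <- : x = (a + U_(q))%MM by [].
      apply: mdeg_le_eq => //; rewrite (Pdeg halpha_n hbeta_n hn hx) mdegD mdeg1 addn1 //.
    have [v [w [[e hv hw] n2]]] := key m a hm hS hdeg.
    apply: span_gen; right; exists n.-1; split; first by lia.
    rewrite e mpolyXD; apply: span_gen; exists 'X_[v], 'X_[w]; split; first exact: mem_pow.
    split => //.
    by move=> i; rewrite -mpolyXD addmC; apply: mem_pow; apply: Sc_to.
  have [y [hy hle]] := exch halpha_n hbeta_n hn hlt hq.
  apply: span_gen; left; rewrite -(submK hle) mpolyXD; apply: pow_mul; exact: mem_pow.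
Qed.
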